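(* Fix $r\in(0,|\xi|_c)$ and let $\alpha(s)=\alpha(r;s)$ for $s>0$. Then: (1) $\alpha\in C^{0,1}_{loc}((0,\infty))\cap C^0((0,\infty))$ and $\alpha$ is strictly increasing in $s$; (2) there exist constants $C_0,C_1,C_2>0$ depending on $\rho_\pm,\mu_\pm,\sigma_\pm,b,g,r$ such that for all $s>0$ $$\alpha(s)\le-C_0+sC_1\quad\text{and}\quad\alpha(s)\ge-\frac{2g(\rho_+-\rho_-)}{\rho_-}r+sC_2.$$
   Context: Fix $b,g>0$, $\rho_+>\rho_->0$, $\mu_\pm>0$, $\sigma_\pm\ge0$ (either both zero or both positive); $[\![\rho]\!]=\rho_+-\rho_-$. Let $\rho(x_3),\mu(x_3)$ equal $\rho_+,\mu_+$ on $(0,1)$ and $\rho_-,\mu_-$ on $(-b,0)$. $X=\{\psi\in H^2((-b,1)):\psi(-b)=\psi'(-b)=0\}$. For $r>0,s>0$: $E(\psi;r,s)=\frac12\int_{-b}^1s\mu(4r^2|\psi'|^2+|r^2\psi+\psi''|^2)dx_3+\frac12r^2(\sigma_+r^2+g\rho_+)|\psi(1)|^2+\frac12r^2(\sigma_-r^2-g[\![\rho]\!])|\psi(0)|^2$, $J(\psi;r)=\frac12\int_{-b}^1\rho(r^2|\psi|^2+|\psi'|^2)dx_3$, $\alpha(r;s)=\inf\{E(\psi;r,s):\psi\in X,\ J(\psi;r)=1\}$. $|\xi|_c=\sqrt{g[\![\rho]\!]/\sigma_-}$ if $\sigma_->0$, $|\xi|_c=\infty$ if $\sigma_-=0$. 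*)

(* Defs.v *)
From HB Require Import structures.
From mathcomp Require Import all_boot all_order all_algebra.
From mathcomp Require Import all_classical all_reals all_analysis.
Set Implicit Arguments. Unset Strict Implicit. Unset Printing Implicit Defensive.
Import Order.TTheory GRing.Theory Num.Theory.
Import numFieldNormedType.Exports.
Local Open Scope classical_set_scope.
Local Open Scope ring_scope.

Section Defs.
Variable R : realType.
Local Notation mu := (@lebesgue_measure R).

(* (psi, dpsi, ddpsi) represents an element of H^2((a,c)) : psi is the
   (continuous) representative, dpsi its (continuous) first derivative and
   ddpsi its weak second derivative, which lies in L^2((a,c)).  On a bounded
   interval this is exactly the characterization of H^2 in one dimension:
   psi' absolutely continuous with psi'' in L^2. *)
Definition H2_rep (a c : R) (psi dpsi ddpsi : R -> R) : Prop :=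
  [/\ measurable_fun `[a, c] ddpsi,
      (\int[mu]_(x in `[a, c]) ((ddpsi x) ^+ 2)%:E < +oo)%E,
      (forall x, a <= x <= c ->
         dpsi x = dpsi a + \int[mu]_(t in `[a, x]) ddpsi t) &
      (forall x, a <= x <= c ->
         psi x = psi a + \int[mu]_(t in `[a, x]) dpsi t)].

Definition in_X (b : R) (psi dpsi ddpsi : R -> R) : Prop :=
  [/\ H2_rep (- b) 1 psi dpsi ddpsi, psi (- b) = 0 & dpsi (- b) = 0].

Definition pw (vp vm : R) (x : R) : R := if x < 0 then vm else vp.

Definition Efun (b g rhop rhom mup mum sigp sigm : R)
    (psi dpsi ddpsi : R -> R) (r s : R) : R :=
  2^-1 * (\int[mu]_(x in `[- b, 1])
            (s * pw mup mum x *
             (4 * r ^+ 2 * (dpsi x) ^+ 2 + (r ^+ 2 * psi x + ddpsi x) ^+ 2)))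
  + 2^-1 * r ^+ 2 * (sigp * r ^+ 2 + g * rhop) * (psi 1) ^+ 2
  + 2^-1 * r ^+ 2 * (sigm * r ^+ 2 - g * (rhop - rhom)) * (psi 0) ^+ 2.

Definition Jfun (b rhop rhom : R) (psi dpsi : R -> R) (r : R) : R :=
  2^-1 * (\int[mu]_(x in `[- b, 1])
            (pw rhop rhom x * (r ^+ 2 * (psi x) ^+ 2 + (dpsi x) ^+ 2))).

Definition alpha (b g rhop rhom mup mum sigp sigm r s : R) : \bar R :=
  ereal_inf [set e : \bar R | exists psi dpsi ddpsi,
      [/\ in_X b psi dpsi ddpsi, Jfun b rhop rhom psi dpsi r = 1 &
           e = (Efun b g rhop rhom mup mum sigp sigm psi dpsi ddpsi r s)%:E]].

(* r < |xi|_c, where |xi|_c = sqrt(g [[rho]] / sigma_-) if sigma_- > 0 and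
   |xi|_c = +infinity if sigma_- = 0 *)
Definition below_crit (g rhop rhom sigm r : R) : bool :=
  (sigm == 0) || (r < Num.sqrt (g * (rhop - rhom) / sigm)).

End Defs.

(* Main.v *)
Require Import Defs.
From HB Require Import structures.
From mathcomp Require Import all_boot all_order all_algebra.
From mathcomp Require Import all_classical all_reals all_analysis.
From mathcomp Require Import ring lra measurable_realfun.
Import Order.TTheory GRing.Theory Num.Theory.
Import numFieldNormedType.Exports.
Local Open Scope classical_set_scope.
Local Open Scope ring_scope.

Section Gen.
Variable R : realType.
Local Notation mu := (@lebesgue_measure R).

Lemma within_addc (a c k : R) (f : R -> R) : a < c ->
  {within `[a, c], continuous f} -> {within `[a, c], continuous (fun x => k + f x)}.
Proof.
move=> ac /(continuous_within_itvP _ ac) [h1 h2 h3].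
apply/(continuous_within_itvP _ ac); split.
- move=> x xI; apply: continuousD; [exact: cst_continuous| exact: h1].
- by apply: cvgD => //; exact: cvg_cst.
- by apply: cvgD => //; exact: cvg_cst.
Qed.


Lemma within_add (a c : R) (f g : R -> R) : a < c ->
  {within `[a, c], continuous f} -> {within `[a, c], continuous g} ->
  {within `[a, c], continuous (fun x => f x + g x)}.
Proof.
move=> ac /(continuous_within_itvP _ ac) [h1 h2 h3].
move=> /(continuous_within_itvP _ ac) [k1 k2 k3].
apply/(continuous_within_itvP _ ac); split.
- by move=> x xI; apply: continuousD; [exact: h1| exact: k1].
- exact: cvgD.
- exact: cvgD.
Qed.

Lemma within_mul (a c : R) (f g : R -> R) : a < c ->
  {within `[a, c], continuous f} -> {within `[a, c], continuous g} ->
  {within `[a, c], continuous (fun x => f x * g x)}.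
Proof.
move=> ac /(continuous_within_itvP _ ac) [h1 h2 h3].
move=> /(continuous_within_itvP _ ac) [k1 k2 k3].
apply/(continuous_within_itvP _ ac); split.
- by move=> x xI; apply: continuousM; [exact: h1| exact: k1].
- exact: cvgM.
- exact: cvgM.
Qed.

Lemma within_sq (a c : R) (f : R -> R) : a < c ->
  {within `[a, c], continuous f} -> {within `[a, c], continuous (fun x => f x ^+ 2)}.
Proof.
move=> ac h; suff -> : (fun x => f x ^+ 2) = (fun x => f x * f x) by exact: within_mul.
by apply: funext => x; rewrite expr2.
Qed.

Lemma within_T (A : set R) (f : R -> R) : continuous f -> {within A, continuous f}.
Proof. exact: continuous_subspaceT. Qed.

Lemma cont_lin (k : R) : continuous (fun y : R => y - k).
Proof. by move=> y; apply: cvgB; [exact: cvg_id| exact: cvg_cst]. Qed.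

Lemma cont_cst (k : R) : continuous (fun _ : R => k).
Proof. by move=> y; exact: cvg_cst. Qed.

Lemma cont_id : continuous (fun y : R => y).
Proof. by move=> y; exact: cvg_id. Qed.

Lemma intg_cont (a c : R) (f : R -> R) : {within `[a, c], continuous f} ->
  mu.-integrable `[a, c] (EFin \o f).
Proof. by move=> h; apply: continuous_compact_integrable; [exact: segment_compact|]. Qed.


Lemma Rint_sub (A B : set R) (f : R -> R) : measurable A -> measurable B ->
  A `<=` B -> mu.-integrable B (EFin \o f) -> (forall x, B x -> 0 <= f x) ->
  \int[mu]_(x in A) f x <= \int[mu]_(x in B) f x.
Proof.
move=> mA mB AB hf f0; rewrite /Rintegral; apply: fine_le.
- by apply: integrable_fin_num => //; exact: integrableS hf.
- exact: integrable_fin_num.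
- apply: ge0_subset_integral => //.
  by case/integrableP: hf.
Qed.


Lemma mD' (A : set R) (f g : R -> R) : measurable_fun A f -> measurable_fun A g ->
  measurable_fun A (fun x => f x + g x).
Proof. exact: measurable_funD. Qed.
Lemma mM' (A : set R) (f g : R -> R) : measurable_fun A f -> measurable_fun A g ->
  measurable_fun A (fun x => f x * g x).
Proof. exact: measurable_funM. Qed.
Lemma mX' (A : set R) (f : R -> R) : measurable_fun A f ->
  measurable_fun A (fun x => f x ^+ 2).
Proof. exact: measurable_funX. Qed.
Lemma mC' (A : set R) (k : R) : measurable_fun A (fun _ : R => k).
Proof. exact: measurable_cst. Qed.
Lemma mpw (A : set R) (vp vm : R) : measurable A -> measurable_fun A (pw vp vm).
Proof.
move=> mA; apply: (measurable_funS (E := setT)) => //; rewrite /pw.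
by apply: measurable_fun_ifT => //; apply: measurable_fun_ltr.
Qed.

Lemma iadd (A : set R) (f g : R -> R) : measurable A ->
  mu.-integrable A (EFin \o f) -> mu.-integrable A (EFin \o g) ->
  mu.-integrable A (EFin \o (fun x => f x + g x)).
Proof.
move=> mA hf hg.
by apply: (eq_integrable _ _ _ _ (integrableD _ hf hg)).
Qed.

Lemma iscale (A : set R) (k : R) (f : R -> R) : measurable A ->
  mu.-integrable A (EFin \o f) -> mu.-integrable A (EFin \o (fun x => k * f x)).
Proof.
move=> mA hf.
by apply: (eq_integrable _ _ _ _ (integrableZl _ k hf)).
Qed.

Lemma ile (A : set R) (f g : R -> R) : measurable A -> measurable_fun A f ->
  (forall x, A x -> `|f x| <= g x) -> mu.-integrable A (EFin \o g) ->
  mu.-integrable A (EFin \o f).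
Proof.
move=> mA mf fg hg; apply: (le_integrable _ _ _ hg) => //.
  exact/measurable_EFinP.
move=> x Ax /=; rewrite lee_fin; apply: le_trans (fg x Ax) _.
exact: ler_norm.
Qed.

Lemma pw_le (vp vm x : R) : 0 < vp -> 0 < vm -> pw vp vm x <= vp + vm.
Proof. by move=> hp hm; rewrite /pw; case: ifP => _; lra. Qed.

Lemma pw_ge0 (vp vm x : R) : 0 < vp -> 0 < vm -> 0 <= pw vp vm x.
Proof. by move=> hp hm; rewrite /pw; case: ifP => _; lra. Qed.

Lemma pw_min (vp vm x : R) : Num.min vp vm <= pw vp vm x.
Proof. by rewrite /pw; case: ifP => _; rewrite ge_min lexx ?orbT. Qed.

Lemma pw_max (vp vm x : R) : vm <= vp -> pw vp vm x <= vp.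
Proof. by move=> h; rewrite /pw; case: ifP. Qed.

Lemma pw_intg (A : set R) (vp vm : R) (h : R -> R) : measurable A ->
  0 < vp -> 0 < vm -> measurable_fun A h -> mu.-integrable A (EFin \o h) ->
  (forall x, A x -> 0 <= h x) ->
  mu.-integrable A (EFin \o (fun x => pw vp vm x * h x)).
Proof.
move=> mA hp hm mh ih h0.
apply: (ile A _ (fun x => (vp + vm) * h x) mA _ _ (iscale A (vp + vm) h mA ih)).
  exact: mM' A _ _ (mpw A _ _ mA) mh.
move=> x Ax; rewrite ger0_norm; last by rewrite mulr_ge0 // ?pw_ge0 // h0.
by apply: ler_wpM2r; [exact: h0| exact: pw_le].
Qed.

End Gen.
Arguments iadd {R A f g}. Arguments iscale {R A} k {f}. Arguments ile {R A f g}.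
Arguments intg_cont {R a c f}. Arguments mD' {R A f g}. Arguments mM' {R A f g}.
Arguments mX' {R A f}. Arguments mC' {R A}. Arguments mpw {R A}.
Arguments pw_intg {R A vp vm h}. Arguments Rint_sub {R A B f}.
Section Reg.
Variable R : realType.
Local Notation mu := (@lebesgue_measure R).
Variables (b : R) (psi dpsi ddpsi : R -> R).
Hypothesis hb : 0 < b.
Hypothesis hX : in_X b psi dpsi ddpsi.


Lemma ddsq_int : mu.-integrable `[- b, 1] (EFin \o (fun x => ddpsi x ^+ 2)).
Proof.
case: hX => -[mdd fin _ _] _ _.
apply/integrableP; split.
  by apply/measurable_EFinP; exact: measurable_funX.
apply: le_lt_trans fin; rewrite le_eqVlt; apply/orP; left; apply/eqP.
by apply: eq_integral => x _ /=; rewrite ger0_norm // sqr_ge0.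
Qed.

Lemma dd_int : mu.-integrable `[- b, 1] (EFin \o ddpsi).
Proof.
case: hX => -[mdd fin _ _] _ _.
apply: (@le_integrable _ _ _ mu _ _ _ (EFin \o (fun x => 1 + ddpsi x ^+ 2))).
- exact: measurable_itv.
- exact/measurable_EFinP.
- move=> x _ /=; rewrite lee_fin.
  have h1 := normr_ge0 (ddpsi x).
  have h2 : `|ddpsi x| ^+ 2 = ddpsi x ^+ 2 by rewrite real_normK // num_real.
  rewrite [X in _ <= X]ger0_norm; last by rewrite addr_ge0 // sqr_ge0.
  nra.
- have h : mu.-integrable `[- b, 1] (cst 1%:E \+ (EFin \o (fun x => ddpsi x ^+ 2))).
    apply: integrableD; [exact: measurable_itv| |exact: ddsq_int].
    apply: continuous_compact_integrable; first exact: segment_compact.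
    by move=> x; exact: cst_continuous.
  by apply: (eq_integrable _ _ _ _ h).
Qed.


Definition Dc (x : R) := dpsi (- b) + \int[mu]_(t in `[- b, x]) ddpsi t.
Definition Pc (x : R) := psi (- b) + \int[mu]_(t in `[- b, x]) Dc t.

Lemma mb1 : - b < 1.
Proof. by rewrite (@lt_le_trans _ _ 0) // ?oppr_lt0 // ler01. Qed.

Lemma Dc_cont : {within `[- b, 1], continuous Dc}.
Proof.
apply: within_addc; first exact: mb1.
exact: (parameterized_integral_continuous (ltW mb1) dd_int).
Qed.

Lemma Dc_int : mu.-integrable `[- b, 1] (EFin \o Dc).
Proof. by apply: continuous_compact_integrable; [exact: segment_compact| exact: Dc_cont]. Qed.

Lemma Pc_cont : {within `[- b, 1], continuous Pc}.
Proof.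
apply: within_addc; first exact: mb1.
exact: (parameterized_integral_continuous (ltW mb1) Dc_int).
Qed.

Lemma Dc_eq x : - b <= x <= 1 -> dpsi x = Dc x.
Proof. by case: hX => -[_ _ h _] _ _; apply: h. Qed.

Lemma Pc_eq x : - b <= x <= 1 -> psi x = Pc x.
Proof.
case: hX => -[_ _ _ h] _ _ /[dup] /andP[x1 x2] /h ->; rewrite /Pc; congr (_ + _).
apply: eq_Rintegral => t; rewrite inE /= in_itv /= => /andP[t1 t2].
by apply: Dc_eq; rewrite t1 (le_trans t2 x2).
Qed.

Lemma Pc_der x : - b < x < 1 -> is_derive x (1:R) Pc (Dc x).
Proof.
case/andP => x1 x2.
have cx : {for x, continuous Dc}.
  have [h _ _] := (continuous_within_itvP _ mb1).1 Dc_cont.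
  by apply: h; rewrite in_itv /= x1 x2.
have [d1 d2] := continuous_FTC1_closed x2 Dc_int x1 cx.
have hF : is_derive x (1:R) (fun y => \int[mu]_(t in `[- b, y]) Dc t) (Dc x).
  by apply: (DeriveDef d1); rewrite -derive1E; exact: d2.
have h := is_deriveD (is_derive_cst (psi (- b)) x 1) hF.
rewrite add0r in h; exact: h.
Qed.

Lemma Pc_LR : derivable_oo_LRcontinuous Pc (- b) 1.
Proof.
have [_ h2 h3] := (continuous_within_itvP _ mb1).1 Pc_cont.
split => // x; rewrite in_itv /= => hx.
by have [] := Pc_der x hx.
Qed.


Lemma Pc_mb : Pc (- b) = 0.
Proof. by rewrite /Pc set_itv1 Rintegral_set1 addr0; case: hX. Qed.

Lemma Pc_cont_at x : - b < x < 1 -> {for x, continuous Pc}.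
Proof.
move=> hx; have [h _ _] := (continuous_within_itvP _ mb1).1 Pc_cont.
by apply: h; rewrite in_itv /=.
Qed.

Lemma Pc_d1 x : - b < x < 1 -> derive1 Pc x = Dc x.
Proof. by move=> hx; have H := Pc_der x hx; rewrite derive1E derive_val. Qed.

Lemma ibp0 : \int[mu]_(x in `[- b, 0]) (Pc x * Dc x) =
  Pc 0 * Pc 0 - \int[mu]_(x in `[- b, 0]) (Dc x * Pc x).
Proof.
have hb0 : - b < 0 by rewrite oppr_lt0.
have sub : `[- b, 0] `<=` `[- b, 1].
  by apply: subset_itvl; rewrite bnd_simp ler01.
have cD : {within `[- b, 0], continuous Dc} := continuous_subspaceW sub Dc_cont.
have LR : derivable_oo_LRcontinuous Pc (- b) 0.
  split.
  - move=> x; rewrite in_itv /= => /andP[x1 x2].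
    have hx : - b < x < 1 by rewrite x1 (lt_trans x2 ltr01).
    by have [] := Pc_der x hx.
  - by case: Pc_LR.
  - by apply: cvg_at_left_filter; apply: Pc_cont_at; rewrite hb0 ltr01.
have d : {in `]- b, 0[, derive1 Pc =1 Dc}.
  move=> x; rewrite in_itv /= => /andP[x1 x2]; apply: Pc_d1.
  by rewrite x1 (lt_trans x2 ltr01).
have := Rintegration_by_parts hb0 cD LR d cD LR d.
by rewrite Pc_mb mul0r subr0.
Qed.

Definition Wc (x : R) := (x - 2) * Pc x.
Definition Wd (x : R) := Pc x + (x - 2) * Dc x.

Lemma ibp1 : \int[mu]_(x in `[- b, 1]) (Wc x * Dc x) =
  Wc 1 * Pc 1 - \int[mu]_(x in `[- b, 1]) (Wd x * Pc x).
Proof.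
have cW : {within `[- b, 1], continuous Wd}.
  rewrite /Wd; apply: within_add mb1 Pc_cont _.
  apply: (@within_mul _ _ _ (fun x => x - 2) Dc mb1 _ Dc_cont).
  by apply: within_T; exact: cont_lin.
have LR : derivable_oo_LRcontinuous Wc (- b) 1.
  have [_ h2 h3] := Pc_LR.
  split.
  - move=> x hx; have h := Pc_der x hx.
    have : is_derive x (1:R) Wc ((x - 2) * Dc x + Pc x).
      by rewrite /Wc; apply: is_derive_eq; rewrite /GRing.scale /=; ring.
    by case.
  - apply: cvgM h2; apply: cvg_at_right_filter; exact: cont_lin.
  - apply: cvgM h3; apply: cvg_at_left_filter; exact: cont_lin.
have d : {in `]- b, 1[, derive1 Wc =1 Wd}.
  move=> x hx; have h := Pc_der x hx.
  have H : is_derive x (1:R) Wc ((x - 2) * Dc x + Pc x).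
    by rewrite /Wc; apply: is_derive_eq; rewrite /GRing.scale /=; ring.
  by rewrite derive1E derive_val /Wd addrC.
have d2 : {in `]- b, 1[, derive1 Pc =1 Dc} by move=> x hx; exact: Pc_d1.
have := Rintegration_by_parts mb1 cW LR d Dc_cont Pc_LR d2.
by rewrite /Wc Pc_mb !mulr0 subr0.
Qed.


Definition wcst (k : R) := within_T R `[- b, 1] _ (cont_cst R k).
Definition wsq f (h : {within `[- b, 1], continuous f}) := within_sq R _ _ f mb1 h.
Definition wadd f g (h1 : {within `[- b, 1], continuous f}) (h2 : {within `[- b, 1], continuous g}) :=
  within_add R _ _ f g mb1 h1 h2.
Definition wmul f g (h1 : {within `[- b, 1], continuous f}) (h2 : {within `[- b, 1], continuous g}) :=
  within_mul R _ _ f g mb1 h1 h2.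
Arguments wsq {f}. Arguments wadd {f g}. Arguments wmul {f g}.

Lemma sub0 : `[- b, 0] `<=` `[- b, (1:R)].
Proof. by apply: subset_itvl; rewrite bnd_simp ler01. Qed.

Lemma PD_L1 (r : R) : 0 < r ->
  r * Pc 0 ^+ 2 <= \int[mu]_(x in `[- b, 1]) (r ^+ 2 * Pc x ^+ 2 + Dc x ^+ 2).
Proof.
move=> r0.
have c1 : {within `[- b, 1], continuous (fun x => Pc x * Dc x)} := wmul Pc_cont Dc_cont.
have c2 : {within `[- b, 1], continuous (fun x => r ^+ 2 * Pc x ^+ 2 + Dc x ^+ 2)} :=
  wadd (wmul (wcst (r ^+ 2)) (wsq Pc_cont)) (wsq Dc_cont).
have hb0 : - b < 0 by rewrite oppr_lt0.
have e : \int[mu]_(x in `[- b, 0]) (Dc x * Pc x) = \int[mu]_(x in `[- b, 0]) (Pc x * Dc x).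
  by apply: eq_Rintegral => x _; rewrite mulrC.
have := ibp0; rewrite e => h.
have -> : r * Pc 0 ^+ 2 = \int[mu]_(x in `[- b, 0]) ((2 * r) * (Pc x * Dc x)).
  rewrite RintegralZl //; last first.
    by apply: intg_cont; exact: continuous_subspaceW sub0 c1.
  have h2 : \int[mu]_(x in `[- b, 0]) (Pc x * Dc x) = (Pc 0 * Pc 0) / 2 by lra.
  by rewrite h2 expr2; field.
have H0 : forall x, [set` `[- b, (1:R)]] x -> 0 <= r ^+ 2 * Pc x ^+ 2 + Dc x ^+ 2.
  by move=> x _; apply: addr_ge0; [apply: mulr_ge0; apply: sqr_ge0 | apply: sqr_ge0].
have hs := @Rint_sub R _ _ (fun x => r ^+ 2 * Pc x ^+ 2 + Dc x ^+ 2)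
  (measurable_itv `[- b, 0]) (measurable_itv `[- b, 1]) sub0 (intg_cont c2) H0.
apply: le_trans hs.
apply: le_Rintegral.
- exact: measurable_itv.
- apply: intg_cont; apply: continuous_subspaceW sub0 _.
  exact: (wmul (wcst (2 * r)) c1).
- by apply: intg_cont; exact: continuous_subspaceW sub0 c2.
- move=> x _ /=; have := sqr_ge0 (r * Pc x - Dc x); nra.
Qed.


Lemma PD_P : \int[mu]_(x in `[- b, 1]) (Pc x ^+ 2) <=
  4 * (b + 2) ^+ 2 * \int[mu]_(x in `[- b, 1]) (Dc x ^+ 2).
Proof.
have mI : measurable [set` `[- b, (1:R)]] by exact: measurable_itv.
have cL : {within `[- b, 1], continuous (fun x : R => x - 2)}.
  by apply: within_T; exact: cont_lin.
have c1 : {within `[- b, 1], continuous (fun x => Pc x * Dc x)} := wmul Pc_cont Dc_cont.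
have cw : {within `[- b, 1], continuous (fun x => (x - 2) * (Pc x * Dc x))} := wmul cL c1.
have iP2 := intg_cont (wsq Pc_cont).
have iD2 := intg_cont (wsq Dc_cont).
have iw := intg_cont cw.
set Ip := \int[mu]_(x in `[- b, 1]) (Pc x ^+ 2).
set Id := \int[mu]_(x in `[- b, 1]) (Dc x ^+ 2).
set T := \int[mu]_(x in `[- b, 1]) ((x - 2) * (Pc x * Dc x)).
have e1 : \int[mu]_(x in `[- b, 1]) (Wc x * Dc x) = T.
  by apply: eq_Rintegral => x _; rewrite /Wc mulrA.
have e2 : \int[mu]_(x in `[- b, 1]) (Wd x * Pc x) = Ip + T.
  rewrite -RintegralD //; apply: eq_Rintegral => x _; rewrite /Wd; ring.
have e3 : Wc 1 * Pc 1 = - (Pc 1 ^+ 2) by rewrite /Wc; ring.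
have := ibp1; rewrite e1 e2 e3 => h.
have e4 : - 2 * T = \int[mu]_(x in `[- b, 1]) (- 2 * ((x - 2) * (Pc x * Dc x))).
  by rewrite RintegralZl.
have e6 : \int[mu]_(x in `[- b, 1]) (2^-1 * Pc x ^+ 2 + (2 * (b + 2) ^+ 2) * Dc x ^+ 2)
    = 2^-1 * Ip + (2 * (b + 2) ^+ 2) * Id.
  rewrite RintegralD //; last 2 first.
  - by apply: intg_cont; exact: (wmul (wcst _) (wsq Pc_cont)).
  - by apply: intg_cont; exact: (wmul (wcst _) (wsq Dc_cont)).
  by rewrite !RintegralZl.
have le : - 2 * T <= 2^-1 * Ip + (2 * (b + 2) ^+ 2) * Id.
  rewrite e4 -e6; apply: le_Rintegral => //.
  - by apply: intg_cont; exact: (wmul (wcst _) cw).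
  - apply: intg_cont; apply: wadd.
    + exact: (wmul (wcst _) (wsq Pc_cont)).
    + exact: (wmul (wcst _) (wsq Dc_cont)).
  - move=> x; rewrite /= in_itv /= => /andP[x1 x2].
    have h1 : 0 <= ((b + 2) ^+ 2 - (x - 2) ^+ 2) * Dc x ^+ 2.
      apply: mulr_ge0; last exact: sqr_ge0.
      have -> : (b + 2) ^+ 2 - (x - 2) ^+ 2 = (b + x) * (b + 4 - x) by ring.
      by apply: mulr_ge0; clear -x1 x2 hb; lra.
    have h2 := sqr_ge0 (Pc x + 2 * (x - 2) * Dc x).
    clear -h1 h2; nra.
have hP1 := sqr_ge0 (Pc 1).
have -> : 4 * (b + 2) ^+ 2 * Id = 2 * ((2 * (b + 2) ^+ 2) * Id) by ring.
move: le; set K := (2 * (b + 2) ^+ 2) * Id => le.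
clear -h le hP1; lra.
Qed.


Lemma mPc : measurable_fun `[- b, 1] Pc.
Proof. exact: subspace_continuous_measurable_fun (measurable_itv _) Pc_cont. Qed.
Lemma mDc : measurable_fun `[- b, 1] Dc.
Proof. exact: subspace_continuous_measurable_fun (measurable_itv _) Dc_cont. Qed.
Lemma mdd : measurable_fun `[- b, 1] ddpsi.
Proof. by case: hX => -[]. Qed.

Definition hE (r : R) (x : R) := 4 * r ^+ 2 * Dc x ^+ 2 + (r ^+ 2 * Pc x + ddpsi x) ^+ 2.
Definition hJ (r : R) (x : R) := r ^+ 2 * Pc x ^+ 2 + Dc x ^+ 2.

Lemma mI1 : measurable [set` `[- b, (1:R)]].
Proof. exact: measurable_itv. Qed.

Lemma hE_m r : measurable_fun `[- b, 1] (hE r).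
Proof.
apply: mD'; first exact: mM' (mC' _) (mX' mDc).
by apply: mX'; apply: mD' mdd; exact: mM' (mC' _) mPc.
Qed.

Lemma hJ_m r : measurable_fun `[- b, 1] (hJ r).
Proof. by apply: mD' (mX' mDc); exact: mM' (mC' _) (mX' mPc). Qed.

Lemma hJ_c r : {within `[- b, 1], continuous (hJ r)}.
Proof. exact: (wadd (wmul (wcst (r ^+ 2)) (wsq Pc_cont)) (wsq Dc_cont)). Qed.

Lemma hE_i r : mu.-integrable `[- b, 1] (EFin \o hE r).
Proof.
apply: (@ile R _ _ (fun x => 4 * r ^+ 2 * Dc x ^+ 2 +
   (2 * (r ^+ 2 * Pc x) ^+ 2 + 2 * ddpsi x ^+ 2)) mI1 (hE_m r)).
- move=> x _; rewrite /hE ger0_norm; last first.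
    apply: addr_ge0; last exact: sqr_ge0.
    by apply: mulr_ge0; [apply: mulr_ge0; [lra|exact: sqr_ge0]|exact: sqr_ge0].
  rewrite lerD2l; have := sqr_ge0 (r ^+ 2 * Pc x - ddpsi x); nra.
- apply: iadd mI1 _ _.
    exact: intg_cont (wmul (wcst _) (wsq Dc_cont)).
  apply: iadd mI1 _ _.
    exact: intg_cont (wmul (wcst _) (wsq (wmul (wcst _) Pc_cont))).
  by apply: iscale mI1 _; exact: ddsq_int.
Qed.


Lemma inI x : [set` `[- b, (1:R)]] x -> - b <= x <= 1.
Proof. by rewrite /= in_itv. Qed.

Lemma inI' x : x \in [set` `[- b, (1:R)]] -> - b <= x <= 1.
Proof. by rewrite inE /= in_itv. Qed.

Lemma J_eq rhop rhom r : Jfun b rhop rhom psi dpsi r =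
  2^-1 * \int[mu]_(x in `[- b, 1]) (pw rhop rhom x * hJ r x).
Proof.
rewrite /Jfun; congr (_ * _); apply: eq_Rintegral => x /inI' hx.
by rewrite /hJ (Pc_eq x hx) (Dc_eq x hx).
Qed.

Definition Afun mup mum r := 2^-1 * \int[mu]_(x in `[- b, 1])
  (pw mup mum x * (4 * r ^+ 2 * dpsi x ^+ 2 + (r ^+ 2 * psi x + ddpsi x) ^+ 2)).

Definition Bfun g rhop rhom sigp sigm r :=
  2^-1 * r ^+ 2 * (sigp * r ^+ 2 + g * rhop) * (psi 1) ^+ 2
  + 2^-1 * r ^+ 2 * (sigm * r ^+ 2 - g * (rhop - rhom)) * (psi 0) ^+ 2.

Lemma hE_ge0 r x : 0 <= hE r x.
Proof.
rewrite /hE; apply: addr_ge0; last exact: sqr_ge0.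
by apply: mulr_ge0; [apply: mulr_ge0; [lra|exact: sqr_ge0]|exact: sqr_ge0].
Qed.

Lemma hJ_ge0 r x : 0 <= hJ r x.
Proof. by apply: addr_ge0; [apply: mulr_ge0; apply: sqr_ge0 | apply: sqr_ge0]. Qed.

Lemma pwE_i mup mum r : 0 < mup -> 0 < mum ->
  mu.-integrable `[- b, 1] (EFin \o (fun x => pw mup mum x * hE r x)).
Proof. by move=> h1 h2; apply: pw_intg mI1 h1 h2 (hE_m r) (hE_i r) _ => x _; exact: hE_ge0. Qed.

Lemma pwJ_i rhop rhom r : 0 < rhop -> 0 < rhom ->
  mu.-integrable `[- b, 1] (EFin \o (fun x => pw rhop rhom x * hJ r x)).
Proof.
move=> h1 h2; apply: pw_intg mI1 h1 h2 (hJ_m r) (intg_cont (hJ_c r)) _ => x _.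
exact: hJ_ge0.
Qed.

Lemma A_eq mup mum r : Afun mup mum r =
  2^-1 * \int[mu]_(x in `[- b, 1]) (pw mup mum x * hE r x).
Proof.
rewrite /Afun; congr (_ * _); apply: eq_Rintegral => x /inI' hx.
by rewrite /hE (Pc_eq x hx) (Dc_eq x hx).
Qed.

Lemma E_eq g rhop rhom mup mum sigp sigm r s : 0 < mup -> 0 < mum ->
  Efun b g rhop rhom mup mum sigp sigm psi dpsi ddpsi r s =
  s * Afun mup mum r + Bfun g rhop rhom sigp sigm r.
Proof.
move=> h1 h2; rewrite /Efun /Bfun /Afun.
have -> : \int[mu]_(x in `[- b, 1]) (s * pw mup mum x *
    (4 * r ^+ 2 * dpsi x ^+ 2 + (r ^+ 2 * psi x + ddpsi x) ^+ 2)) =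
  s * \int[mu]_(x in `[- b, 1]) (pw mup mum x *
    (4 * r ^+ 2 * dpsi x ^+ 2 + (r ^+ 2 * psi x + ddpsi x) ^+ 2)).
  rewrite -RintegralZl.
  - by apply: eq_Rintegral => x _; rewrite mulrA.
  - exact: mI1.
  - apply: (eq_integrable _ _ _ _ (pwE_i mup mum r h1 h2)); first exact: mI1.
    move=> x /inI' hx /=.
    by rewrite /hE (Pc_eq x hx) (Dc_eq x hx).
ring.
Qed.

Lemma hJ_int r : \int[mu]_(x in `[- b, 1]) hJ r x =
  r ^+ 2 * \int[mu]_(x in `[- b, 1]) (Pc x ^+ 2) + \int[mu]_(x in `[- b, 1]) (Dc x ^+ 2).
Proof.
rewrite /hJ RintegralD.
- by rewrite RintegralZl //; exact: intg_cont (wsq Pc_cont).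
- exact: mI1.
- exact: intg_cont (wmul (wcst _) (wsq Pc_cont)).
- exact: intg_cont (wsq Dc_cont).
Qed.

Lemma J_low rhop rhom r : 0 < rhom -> rhom < rhop ->
  rhom * \int[mu]_(x in `[- b, 1]) hJ r x <= 2 * Jfun b rhop rhom psi dpsi r.
Proof.
move=> h1 h2; rewrite J_eq mulrA divff ?mul1r; last by rewrite pnatr_eq0.
rewrite -RintegralZl; last exact: intg_cont (hJ_c r); last exact: mI1.
apply: le_Rintegral.
- exact: mI1.
- exact: iscale mI1 (intg_cont (hJ_c r)).
- by apply: pwJ_i => //; lra.
- move=> x _; apply: ler_wpM2r; first exact: hJ_ge0.
  by rewrite /pw; case: ifP => _; lra.
Qed.

Lemma J_up rhop rhom r : 0 < rhom -> rhom < rhop ->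
  2 * Jfun b rhop rhom psi dpsi r <= rhop * \int[mu]_(x in `[- b, 1]) hJ r x.
Proof.
move=> h1 h2; rewrite J_eq mulrA divff ?mul1r; last by rewrite pnatr_eq0.
rewrite -RintegralZl; last exact: intg_cont (hJ_c r); last exact: mI1.
apply: le_Rintegral.
- exact: mI1.
- by apply: pwJ_i => //; lra.
- exact: iscale mI1 (intg_cont (hJ_c r)).
- move=> x _; apply: ler_wpM2r; first exact: hJ_ge0.
  by rewrite /pw; case: ifP => _; lra.
Qed.

Lemma A_low mup mum r : 0 < mup -> 0 < mum ->
  4 * r ^+ 2 * Num.min mup mum * \int[mu]_(x in `[- b, 1]) (Dc x ^+ 2) <=
  2 * Afun mup mum r.
Proof.
move=> h1 h2; rewrite A_eq mulrA divff ?mul1r; last by rewrite pnatr_eq0.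
rewrite -RintegralZl; last exact: intg_cont (wsq Dc_cont); last exact: mI1.
have m0 : 0 <= Num.min mup mum by rewrite le_min; apply/andP; split; lra.
apply: le_Rintegral.
- exact: mI1.
- exact: iscale mI1 (intg_cont (wsq Dc_cont)).
- exact: pwE_i.
- move=> x _; have hp := pw_min R mup mum x.
  have hh : 4 * r ^+ 2 * Dc x ^+ 2 <= hE r x.
    by rewrite /hE lerDl; exact: sqr_ge0.
  have h4 : 0 <= 4 * r ^+ 2 * Dc x ^+ 2.
    by apply: mulr_ge0; [apply: mulr_ge0; [lra|exact: sqr_ge0]|exact: sqr_ge0].
  have -> : 4 * r ^+ 2 * Num.min mup mum * Dc x ^+ 2 =
    Num.min mup mum * (4 * r ^+ 2 * Dc x ^+ 2) by ring.
  apply: le_trans (ler_wpM2l m0 hh) _.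
  apply: ler_wpM2r => //; exact: hE_ge0.
Qed.


Lemma X1 rhop rhom r : 0 < r -> 0 < rhom -> rhom < rhop ->
  rhom * r * psi 0 ^+ 2 <= 2 * Jfun b rhop rhom psi dpsi r.
Proof.
move=> r0 h1 h2.
have h0 : - b <= (0:R) <= 1 by rewrite oppr_le0 (ltW hb) ler01.
rewrite (Pc_eq 0 h0).
have L := PD_L1 r r0.
have J := J_low rhop rhom r h1 h2.
rewrite -mulrA; apply: le_trans J; apply: ler_wpM2l; first exact: ltW.
exact: L.
Qed.

Definition C2c rhop mup mum r :=
  4 * r ^+ 2 * Num.min mup mum / (rhop * (4 * r ^+ 2 * (b + 2) ^+ 2 + 1)).

Lemma X2 rhop rhom mup mum r : 0 < r -> 0 < rhom -> rhom < rhop -> 0 < mup -> 0 < mum ->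
  C2c rhop mup mum r * Jfun b rhop rhom psi dpsi r <= Afun mup mum r.
Proof.
move=> r0 h1 h2 m1 m2.
have JU := J_up rhop rhom r h1 h2.
have AL := A_low mup mum r m1 m2.
have PP := PD_P.
rewrite hJ_int in JU.
move: JU AL PP.
set J := Jfun _ _ _ _ _ _; set A := Afun _ _ _.
set Ip := \int[mu]_(x in _) (Pc x ^+ 2); set Id := \int[mu]_(x in _) (Dc x ^+ 2).
set m := Num.min mup mum => JU AL PP.
have m0 : 0 < m by rewrite lt_min m1 m2.
have r2 : 0 < r ^+ 2 by rewrite exprn_gt0.
set K := 4 * r ^+ 2 * (b + 2) ^+ 2 + 1.
have K0 : 0 < K by rewrite /K ltr_pwDr // ?ltr01 // mulr_ge0 // ?sqr_ge0 // mulr_ge0 // ltW.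
have h3 : 2 * J <= rhop * K * Id.
  apply: le_trans JU _; rewrite /K -mulrA ler_wpM2l //; first lra.
  have : r ^+ 2 * Ip <= r ^+ 2 * (4 * (b + 2) ^+ 2 * Id) by rewrite ler_wpM2l // ltW.
  move=> H; rewrite mulrDl mul1r lerD2r; apply: le_trans H _.
  by rewrite le_eqVlt; apply/orP; left; apply/eqP; ring.
rewrite /C2c -/K -/m.
rewrite mulrAC ler_pdivrMr; last by rewrite mulr_gt0 // (lt_trans h1 h2).
set M := r ^+ 2 * m.
have M0 : 0 < M by rewrite mulr_gt0.
have e1 : 4 * r ^+ 2 * m * J = 2 * M * (2 * J) by rewrite /M; ring.
rewrite e1.
have e2 : 4 * r ^+ 2 * m * Id = 2 * (2 * M * Id) by rewrite /M; ring.
rewrite e2 in AL.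
have rp : 0 < rhop by exact: lt_trans h1 h2.
have H3 : 2 * M * (2 * J) <= 2 * M * (rhop * K * Id).
  by rewrite ler_wpM2l // mulr_ge0 // ltW.
apply: le_trans H3 _.
have AL' : 2 * M * Id <= A by lra.
have : rhop * K * (2 * M * Id) <= rhop * K * A.
  by rewrite ler_wpM2l // mulr_ge0 // ltW.
move=> H.
have -> : 2 * M * (rhop * K * Id) = rhop * K * (2 * M * Id) by ring.
by rewrite [A * _]mulrC.
Qed.

End Reg.

Section TF.
Variable R : realType.
Local Notation mu := (@lebesgue_measure R).

Lemma ftc_gen (F f : R -> R) : (forall x, is_derive x (1:R) F (f x)) -> continuous f ->
  forall a x, a <= x -> F x = F a + \int[mu]_(t in `[a, x]) f t.
Proof.
move=> dF cf a x; rewrite le_eqVlt => /orP[/eqP ->|ax].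
  by rewrite set_itv1 Rintegral_set1 addr0.
have cF : continuous F.
  move=> y; apply: differentiable_continuous; apply/derivable1_diffP.
  by have [] := dF y.
have LR : derivable_oo_LRcontinuous F a x.
  split.
  - by move=> y _; have [] := dF y.
  - exact: cvg_at_right_filter (cF a).
  - exact: cvg_at_left_filter (cF x).
have d : {in `]a, x[, derive1 F =1 f}.
  by move=> y _; have H := dF y; rewrite derive1E derive_val.
have := continuous_FTC2 ax (within_T _ _ _ cf) LR d.
rewrite /Rintegral => ->; rewrite -EFinB /=; ring.
Qed.

Variables (b k : R).
Hypothesis hb : 0 < b.

Definition psiT (x : R) := k * ((x + b) ^+ 2 * (1 - x)).
Definition dpsiT (x : R) := k * (2 * (x + b) * (1 - x) - (x + b) ^+ 2).
Definition ddT (x : R) := k * (2 * (1 - x) - 4 * (x + b)).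

Lemma psiT_d x : is_derive x (1:R) psiT (dpsiT x).
Proof. by rewrite /psiT /dpsiT; apply: is_derive_eq; rewrite /GRing.scale /=; ring. Qed.
Lemma dpsiT_d x : is_derive x (1:R) dpsiT (ddT x).
Proof. by rewrite /dpsiT /ddT; apply: is_derive_eq; rewrite /GRing.scale /=; ring. Qed.
Lemma ddT_d x : is_derive x (1:R) ddT (k * (- 6)).
Proof. by rewrite /ddT; apply: is_derive_eq; rewrite /GRing.scale /=; ring. Qed.

Lemma cont_of (F : R -> R) (f : R -> R) : (forall x, is_derive x (1:R) F (f x)) -> continuous F.
Proof.
move=> dF y; apply: differentiable_continuous; apply/derivable1_diffP.
by have [] := dF y.
Qed.

Lemma ddT_c : continuous ddT.
Proof. exact: (@cont_of ddT (fun _ => k * (- 6)) ddT_d). Qed.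
Lemma dpsiT_c : continuous dpsiT.
Proof. exact: (@cont_of dpsiT ddT dpsiT_d). Qed.

Lemma psiT_X : in_X b psiT dpsiT ddT.
Proof.
split; last 2 first.
- by rewrite /psiT addNr expr0n /= mul0r mulr0.
- by rewrite /dpsiT addNr expr0n /= !mulr0 mul0r subr0 mulr0.
split.
- apply: subspace_continuous_measurable_fun; first exact: measurable_itv.
  exact: within_T ddT_c.
- have ci : mu.-integrable `[- b, 1] (EFin \o (fun x => ddT x ^+ 2)).
    apply: intg_cont; apply: within_T => y.
    exact: continuousM (ddT_c y) (ddT_c y).
  move/integrableP: ci => [_ H]; apply: le_lt_trans H.
  rewrite le_eqVlt; apply/orP; left; apply/eqP.
  by apply: eq_integral => x _ /=; rewrite ger0_norm // sqr_ge0.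
- move=> x /andP[x1 x2]; exact: (@ftc_gen dpsiT ddT dpsiT_d ddT_c _ _ x1).
- move=> x /andP[x1 x2]; exact: (@ftc_gen psiT dpsiT psiT_d dpsiT_c _ _ x1).
Qed.

End TF.

Section Abs.
Variable R : realType.
Variables (T : Type) (P : T -> Prop) (A B : T -> R) (C2 K : R) (i0 : T).
Hypotheses (hC2 : 0 < C2) (hK : 0 <= K) (Pi0 : P i0)
  (hA : forall i, P i -> C2 <= A i) (hB : forall i, P i -> - K <= B i).

Definition Finf (s : R) : \bar R :=
  ereal_inf [set e | exists i, P i /\ e = (s * A i + B i)%:E].

Definition aa s := fine (Finf s).

Lemma Finf_lb s : 0 < s -> ((- K + s * C2)%:E <= Finf s)%E.
Proof.
move=> s0; apply: le_ereal_inf_tmp => e [i [Pi ->]]; rewrite lee_fin.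
have := hA _ Pi; have := hB _ Pi => h1 h2.
have : s * C2 <= s * A i by rewrite ler_wpM2l // ltW.
lra.
Qed.

Lemma Finf_ub s i : P i -> (Finf s <= (s * A i + B i)%:E)%E.
Proof. by move=> Pi; apply: ereal_inf_lbound; exists i. Qed.

Lemma Finf_fin s : 0 < s -> Finf s = (aa s)%:E.
Proof.
move=> s0; rewrite /aa fineK //; rewrite fin_numElt; apply/andP; split.
- exact: lt_le_trans (ltNyr _) (Finf_lb _ s0).
- exact: le_lt_trans (Finf_ub s i0 Pi0) (ltry _).
Qed.

Lemma aa_lb s : 0 < s -> - K + s * C2 <= aa s.
Proof. by move=> s0; rewrite -lee_fin -Finf_fin //; exact: Finf_lb. Qed.

Lemma aa_ub s i : 0 < s -> P i -> aa s <= s * A i + B i.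
Proof. by move=> s0 Pi; rewrite -lee_fin -Finf_fin //; exact: Finf_ub. Qed.

Lemma aa_approx s e : 0 < s -> 0 < e -> exists i, P i /\ s * A i + B i < aa s + e.
Proof.
move=> s0 e0.
have : (Finf s < (aa s + e)%:E)%E by rewrite Finf_fin // lte_fin ltrDl.
case/ereal_inf_lt => y [i [Pi ->]]; rewrite lte_fin => h.
by exists i.
Qed.

Lemma aa_mono s t : 0 < s -> s <= t -> aa s + (t - s) * C2 <= aa t.
Proof.
move=> s0 st; have t0 : 0 < t by exact: lt_le_trans s0 st.
rewrite -lee_fin -Finf_fin //; apply: le_ereal_inf_tmp => e [i [Pi ->]].
rewrite lee_fin.
have h1 := aa_ub _ _ s0 Pi.
have h2 : (t - s) * C2 <= (t - s) * A i by rewrite ler_wpM2l // ?hA // subr_ge0.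
have -> : t * A i + B i = (s * A i + B i) + (t - s) * A i by ring.
exact: lerD.
Qed.

Lemma aa_lip c d x y : 0 < c -> c <= x -> x <= y -> y <= d ->
  aa y <= aa x + (d * `|A i0| + `|B i0| + K + 1) / c * (y - x).
Proof.
move=> c0 cx xy yd.
have x0 : 0 < x by exact: lt_le_trans c0 cx.
have y0 : 0 < y by exact: lt_le_trans x0 xy.
set N := d * `|A i0| + `|B i0| + K + 1.
apply/ler_addgt0Pr => e e0.
set e' := Num.min e 1.
have e'0 : 0 < e' by rewrite lt_min e0 ltr01.
have e'e : e' <= e by rewrite ge_min lexx.
have e'1 : e' <= 1 by rewrite ge_min lexx orbT.
have [i [Pi hi]] := aa_approx _ _ x0 e'0.
have hub := aa_ub _ _ x0 Pi0.
have hBi := hB _ Pi.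
have hAi : x * A i <= N.
  have h3 : x * A i0 <= d * `|A i0|.
    apply: le_trans (ler_norm _) _; rewrite normrM (ger0_norm (ltW x0)).
    by apply: ler_wpM2r; [exact: normr_ge0 | exact: le_trans xy yd].
  have h4 := ler_norm (B i0).
  rewrite /N; lra.
have Ai : A i <= N / c.
  rewrite ler_pdivlMr //; apply: le_trans hAi; rewrite mulrC.
  apply: ler_wpM2r => //; apply: le_trans (hA _ Pi); exact: ltW.
have h5 : (y - x) * A i <= N / c * (y - x).
  by rewrite mulrC; apply: ler_wpM2r => //; rewrite subr_ge0.
have := aa_ub _ _ y0 Pi.
have -> : y * A i + B i = (x * A i + B i) + (y - x) * A i by ring.
lra.
Qed.

End Abs.

Lemma J_scale (R : realType) (b rhop rhom r : R) (psi dpsi ddpsi : R -> R) (k : R) :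
  0 < b -> in_X b psi dpsi ddpsi -> 0 < rhop -> 0 < rhom ->
  Jfun b rhop rhom (fun x => k * psi x) (fun x => k * dpsi x) r =
  k ^+ 2 * Jfun b rhop rhom psi dpsi r.
Proof.
move=> hb hX hrp hrm; rewrite /Jfun.
have -> : \int[lebesgue_measure]_(x in `[- b, 1])
    (pw rhop rhom x * (r ^+ 2 * (k * psi x) ^+ 2 + (k * dpsi x) ^+ 2)) =
  \int[lebesgue_measure]_(x in `[- b, 1])
    (k ^+ 2 * (pw rhop rhom x * (r ^+ 2 * psi x ^+ 2 + dpsi x ^+ 2))).
  by apply: eq_Rintegral => x _; ring.
rewrite RintegralZl; first by ring.
- exact: measurable_itv.
- apply: (eq_integrable _ _ _ _ (pwJ_i R b psi dpsi ddpsi hb hX rhop rhom r hrp hrm)).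
    exact: mI1.
  move=> x /(inI' R b) hx /=.
  by rewrite /hJ -(Pc_eq R b psi dpsi ddpsi hX x hx) -(Dc_eq R b psi dpsi ddpsi hX x hx).
Qed.

Theorem lemma2p1 (R : realType) (b g rhop rhom mup mum sigp sigm r : R)
  (hb : 0 < b) (hg : 0 < g) (hrho : 0 < rhom < rhop)
  (hmu : 0 < mup /\ 0 < mum)
  (hsig : (sigp = 0 /\ sigm = 0) \/ (0 < sigp /\ 0 < sigm))
  (hr : 0 < r) (hrc : below_crit g rhop rhom sigm r) :
  let al := alpha b g rhop rhom mup mum sigp sigm r in
  exists a : R -> R,
    (forall s, 0 < s -> al s = (a s)%:E) /\
    (* (1) locally Lipschitz, continuous and strictly increasing on (0,oo) *)
    (forall c d, 0 < c -> c <= d -> exists L : R,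
       forall x y, c <= x <= d -> c <= y <= d -> `|a x - a y| <= L * `|x - y|) /\
    (forall s, 0 < s -> {for s, continuous a}) /\
    (forall s t, 0 < s -> s < t -> a s < a t) /\
    (* (2) two-sided affine bounds *)
    (exists C0 C1 C2 : R, [/\ 0 < C0, 0 < C1, 0 < C2 &
       forall s, 0 < s ->
         a s <= - C0 + s * C1 /\
         - (2 * g * (rhop - rhom) / rhom) * r + s * C2 <= a s]).
Proof.
move=> al.
case/andP: hrho => hrm hrmp.
case: hmu => hmp hmm.
have hrp : 0 < rhop by exact: lt_trans hrm hrmp.
have hd : 0 < rhop - rhom by rewrite subr_gt0.
have [sp0 sm0] : 0 <= sigp /\ 0 <= sigm.
  by case: hsig => [[-> ->]|[h1 h2]]; split => //; exact: ltW.
have crit : sigm * r ^+ 2 < g * (rhop - rhom).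
  have gd : 0 < g * (rhop - rhom) by rewrite mulr_gt0.
  have [->|sn0] := eqVneq sigm 0; first by rewrite mul0r.
  have sp : 0 < sigm by rewrite lt_neqAle eq_sym sn0 sm0.
  move: hrc; rewrite /below_crit (negbTE sn0) /= => h.
  have q0 : 0 <= g * (rhop - rhom) / sigm by rewrite divr_ge0 // ltW.
  have : r ^+ 2 < g * (rhop - rhom) / sigm.
    rewrite -(sqr_sqrtr q0); move: h; set q := Num.sqrt _ => h.
    clear -h hr; nra.
  by rewrite ltr_pdivlMr // mulrC.
pose T := ((R -> R) * (R -> R) * (R -> R))%type.
pose P := fun i : T => in_X b i.1.1 i.1.2 i.2 /\ Jfun b rhop rhom i.1.1 i.1.2 r = 1.
pose A := fun i : T => Afun R b i.1.1 i.1.2 i.2 mup mum r.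
pose B := fun i : T => Bfun R i.1.1 g rhop rhom sigp sigm r.
pose C2 := C2c R b rhop mup mum r.
pose K := r * g * (rhop - rhom) / rhom.
have K0 : 0 <= K by rewrite /K divr_ge0 ?mulr_ge0 // ltW.
have C2p : 0 < C2.
  rewrite /C2 /C2c divr_gt0 //.
    by rewrite !mulr_gt0 // ?lt_min ?hmp ?hmm // exprn_gt0.
  rewrite mulr_gt0 // ltr_pwDr // ?ltr01 //.
  apply: mulr_ge0; [apply: mulr_ge0; [by rewrite ler0n | exact: sqr_ge0] | exact: sqr_ge0].
pose J1 := Jfun b rhop rhom (psiT R b 1) (dpsiT R b 1) r.
have J1pos : 0 < J1.
  have := X1 R b _ _ _ hb (psiT_X R b 1) rhop rhom r hr hrm hrmp.
  rewrite /psiT add0r subr0 mulr1 mul1r -/J1 => h.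
  have : 0 < rhom * r * (b ^+ 2) ^+ 2 by rewrite !mulr_gt0 // !exprn_gt0.
  move=> h'; have := lt_le_trans h' h; rewrite pmulr_rgt0 //.
pose k := (Num.sqrt J1)^-1.
have k0 : 0 < k by rewrite /k invr_gt0 sqrtr_gt0.
have hk2 : k ^+ 2 * J1 = 1.
  by rewrite /k exprVn sqr_sqrtr ?ltW // mulVf // gt_eqF.
have epsi : psiT R b k = (fun x => k * psiT R b 1 x).
  by apply: funext => x; rewrite /psiT mul1r.
have edpsi : dpsiT R b k = (fun x => k * dpsiT R b 1 x).
  by apply: funext => x; rewrite /dpsiT mul1r.
pose i0 : T := ((psiT R b k, dpsiT R b k), ddT R b k).
have Pi0 : P i0.
  split; first exact: psiT_X.
  rewrite /= epsi edpsi (J_scale R b rhop rhom r (psiT R b 1) (dpsiT R b 1) (ddT R b 1) k hb (psiT_X R b 1) hrp hrm).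
  exact: hk2.
have hA : forall i, P i -> C2 <= A i.
  move=> [[p d] dd] [hX hJ]; rewrite /A /=.
  have := X2 R b p d dd hb hX rhop rhom mup mum r hr hrm hrmp hmp hmm.
  by rewrite /= in hJ; rewrite hJ mulr1.
have hB : forall i, P i -> - K <= B i.
  move=> [[p d] dd] [hX hJ]; rewrite /B /Bfun /=.
  have := X1 R b p d dd hb hX rhop rhom r hr hrm hrmp.
  rewrite /= in hJ; rewrite hJ mulr1 => h1.
  have t1 : 0 <= 2^-1 * r ^+ 2 * (sigp * r ^+ 2 + g * rhop) * p 1 ^+ 2.
    apply: mulr_ge0; last exact: sqr_ge0.
    apply: mulr_ge0; first by apply: mulr_ge0; [by rewrite invr_ge0 ler0n | exact: sqr_ge0].
    apply: addr_ge0; first by apply: mulr_ge0 => //; exact: sqr_ge0.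
    by apply: mulr_ge0; exact: ltW.
  set X := p 0 ^+ 2 in h1 *.
  have X0 : 0 <= X by exact: sqr_ge0.
  have t2 : - (2^-1 * r ^+ 2 * (g * (rhop - rhom)) * X) <=
      2^-1 * r ^+ 2 * (sigm * r ^+ 2 - g * (rhop - rhom)) * X.
    rewrite -subr_ge0.
    have -> : 2^-1 * r ^+ 2 * (sigm * r ^+ 2 - g * (rhop - rhom)) * X -
      - (2^-1 * r ^+ 2 * (g * (rhop - rhom)) * X) = 2^-1 * r ^+ 2 * (sigm * r ^+ 2) * X by ring.
    apply: mulr_ge0 => //; apply: mulr_ge0; last by apply: mulr_ge0 => //; exact: sqr_ge0.
    by apply: mulr_ge0; [by rewrite invr_ge0 ler0n | exact: sqr_ge0].
  have t3 : 2^-1 * r ^+ 2 * (g * (rhop - rhom)) * X <= K.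
    rewrite /K ler_pdivlMr //.
    have -> : 2^-1 * r ^+ 2 * (g * (rhop - rhom)) * X * rhom =
       (2^-1 * r * (g * (rhop - rhom))) * (rhom * r * X) by ring.
    have -> : r * g * (rhop - rhom) = (2^-1 * r * (g * (rhop - rhom))) * 2 by field.
    by apply: ler_wpM2l => //; rewrite !mulr_ge0 // ?invr_ge0 ?ler0n // ltW.
  lra.
pose a := aa R T P A B.
have alE : forall s, al s = Finf R T P A B s.
  move=> s; rewrite /al /alpha /Finf; congr ereal_inf.
  apply/funext => e; apply/propext; split.
  - move=> [psi [dpsi [ddpsi [hX hJ ->]]]].
    exists ((psi, dpsi), ddpsi); split; first by split.
    by rewrite (E_eq R b psi dpsi ddpsi hb hX g rhop rhom mup mum sigp sigm r s hmp hmm).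
  - move=> [[[psi dpsi] ddpsi] [[hX hJ] ->]].
    exists psi, dpsi, ddpsi; split => //.
    by rewrite (E_eq R b psi dpsi ddpsi hb hX g rhop rhom mup mum sigp sigm r s hmp hmm).
have lip : forall c d, 0 < c -> c <= d -> exists L : R,
    forall x y, c <= x <= d -> c <= y <= d -> `|a x - a y| <= L * `|x - y|.
  move=> c d c0 cd.
  exists ((d * `|A i0| + `|B i0| + K + 1) / c) => x y /andP[cx xd] /andP[cy yd].
  set L := (d * `|A i0| + `|B i0| + K + 1) / c.
  have x0 : 0 < x by exact: lt_le_trans c0 cx.
  have y0 : 0 < y by exact: lt_le_trans c0 cy.
  case: (leP x y) => xy.
  + have h1 := aa_lip R T P A B C2 K i0 C2p Pi0 hA hB c d x y c0 cx xy yd.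
    have h2 := aa_mono R T P A B C2 K i0 Pi0 hA hB x y x0 xy.
    have h3 : 0 <= (y - x) * C2 by rewrite mulr_ge0 ?subr_ge0 // ltW.
    have nxy : `|x - y| = y - x by rewrite distrC ger0_norm // subr_ge0.
    rewrite nxy -/L ler_norml.
    rewrite -/a in h1 h2; move: h1 h2 h3; set Q := L * (y - x); set Z := (y - x) * C2.
    move=> h1 h2 h3; apply/andP; split; lra.
  + have yx := ltW xy.
    have h1 := aa_lip R T P A B C2 K i0 C2p Pi0 hA hB c d y x c0 cy yx xd.
    have h2 := aa_mono R T P A B C2 K i0 Pi0 hA hB y x y0 yx.
    have h3 : 0 <= (x - y) * C2 by rewrite mulr_ge0 ?subr_ge0 // ltW.
    have nxy : `|x - y| = x - y by rewrite ger0_norm // subr_ge0.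
    rewrite nxy -/L ler_norml.
    rewrite -/a in h1 h2; move: h1 h2 h3; set Q := L * (x - y); set Z := (x - y) * C2.
    move=> h1 h2 h3; apply/andP; split; lra.
exists a; split; last split; last split; last split.
- by move=> s s0; rewrite alE; exact: (Finf_fin R T P A B C2 K i0 Pi0 hA hB s s0).
- exact: lip.
- move=> s s0.
  have s20 : 0 < s / 2 by rewrite divr_gt0.
  have s2 : s / 2 <= 2 * s by lra.
  have [L HL] := lip (s / 2) (2 * s) s20 s2.
  apply/cvgrPdist_le => e e0.
  have L1 : 0 < `|L| + 1 by rewrite ltr_pwDr // ltr01.
  pose de := Num.min (s / 2) (e / (`|L| + 1)).
  have de0 : 0 < de by rewrite lt_min s20 divr_gt0.
  exists de => //= t; rewrite /ball_ /= => hst.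
  have h1 : `|s - t| < s / 2 by apply: lt_le_trans hst _; rewrite ge_min lexx.
  have h2 : `|s - t| < e / (`|L| + 1) by apply: lt_le_trans hst _; rewrite ge_min lexx orbT.
  have st : s / 2 <= t <= 2 * s.
    move: h1; rewrite ltr_norml => /andP[u1 u2]; apply/andP; split; lra.
  have ss : s / 2 <= s <= 2 * s by apply/andP; split; lra.
  apply: le_trans (HL s t ss st) _.
  have hL : L * `|s - t| <= `|L| * `|s - t| := ler_wpM2r (normr_ge0 _) (ler_norm L).
  have h3 : `|L| * `|s - t| <= (`|L| + 1) * (e / (`|L| + 1)).
    apply: ler_pM; [exact: normr_ge0 | exact: normr_ge0 | | exact: ltW].
    by rewrite lerDl ler01.
  apply: le_trans hL _; apply: le_trans h3 _.
  by rewrite mulrC divfK // gt_eqF.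
- move=> s t s0 st.
  have h := aa_mono R T P A B C2 K i0 Pi0 hA hB s t s0 (ltW st).
  have : 0 < (t - s) * C2 by rewrite mulr_gt0 // subr_gt0.
  rewrite -/a in h; lra.
- exists (- B i0), (`|A i0| + 1), C2; split => //.
  + rewrite oppr_gt0 /B /Bfun /=.
    have -> : psiT R b k 1 = 0 by rewrite /psiT subrr !mulr0.
    have -> : psiT R b k 0 = k * b ^+ 2 by rewrite /psiT add0r subr0 mulr1.
    rewrite expr0n /= mulr0 add0r.
    rewrite pmulr_llt0; last by rewrite exprn_gt0 // mulr_gt0 // exprn_gt0.
    rewrite pmulr_rlt0; last by rewrite mulr_gt0 // ?invr_gt0 ?ltr0n // exprn_gt0.
    by rewrite subr_lt0.
  + move=> s s0; split.
    * have := aa_ub R T P A B C2 K i0 Pi0 hA hB s i0 s0 Pi0.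
      have : s * A i0 <= s * (`|A i0| + 1).
        apply: ler_wpM2l; first exact: ltW.
        by apply: le_trans (ler_norm _) _; rewrite lerDl ler01.
      rewrite -/a; lra.
    * have := aa_lb R T P A B C2 K i0 Pi0 hA hB s s0.
      have : K <= 2 * g * (rhop - rhom) / rhom * r.
        rewrite -subr_ge0.
        have -> : 2 * g * (rhop - rhom) / rhom * r - K = K.
          by rewrite /K; field; rewrite gt_eqF.
        exact: K0.
      rewrite -/a; lra.
Qed.
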